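(* Let $N\ge1$ and define $$p_k=\begin{cases}\tilde n_0,&k=0,\\ \sum_{l=0}^{k}\tilde n_l-k\,\tilde n_{k+1},&k=1,\dots,N-1,\\ -\infty,&k=N.\end{cases}$$ Then for every $k\in\{1,\dots,N\}$ and every $r\in[0,\tilde n_0]$ with $r\ge p_k$, $$d_{(n_0,\dots,n_N)}(r)=d_{(\tilde n_0,\dots,\tilde n_k)}(r).$$
   Context: For a vector $\mathbf n=(n_0,\dots,n_N)$ of positive integers ($N\ge1$), let $\tilde n_0\le\cdots\le\tilde n_N$ be its nondecreasing rearrangement, $n_{\min}=\tilde n_0$, $c_i=1-i+\min_{k'=1,\dots,N}\lfloor(\sum_{l=0}^{k'}\tilde n_l-i)/k'\rfloor$ for $i=1,\dots,n_{\min}$, and $d_{\mathbf n}(k)=\sum_{i=k+1}^{n_{\min}}c_i$ for integers $0\le k\le n_{\min}$; $d_{\mathbf n}(r)$ for real $r\in[0,n_{\min}]$ is the piecewise-linear interpolation of these points. This is the diversity-multiplexing tradeoff of the $(n_0,\dots,n_N)$ Rayleigh product channel $\mathbf y=\sqrt{\mathsf{SNR}/(n_1\cdots n_N)}\mathbf H_1\cdots\mathbf H_N\mathbf x+\mathbf z$ with independent i.i.d. $\mathcal{CN}(0,1)$ matrices $\mathbf H_i\in\mathbb C^{n_{i-1}\times n_i}$. *)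

(* Defs.v *)
From HB Require Import structures.
From mathcomp Require Import all_boot all_order all_algebra.
Set Implicit Arguments. Unset Strict Implicit. Unset Printing Implicit Defensive.
Import Order.TTheory GRing.Theory Num.Theory.

(* A channel dimension vector n = (n_0,...,n_N) is a seq nat of size N+1. *)

Definition ntil (s : seq nat) (l : nat) : nat := nth 0 (sort leq s) l.

(* N, the number of matrices *)
Definition NN (s : seq nat) : nat := (size s).-1.

Definition nmin (s : seq nat) : nat := ntil s 0.

(* floor((\sum_{l=0}^{k'} \tilde n_l - i) / k'); the numerator is >= 0 for i <= n_min *)
Definition cterm (s : seq nat) (i k' : nat) : nat :=
  ((\sum_(0 <= l < k'.+1) ntil s l) - i) %/ k'.

Definition cmin (s : seq nat) (i : nat) : nat :=
  \big[minn/cterm s i 1]_(1 <= k' < (NN s).+1) cterm s i k'.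

Definition cc (s : seq nat) (i : nat) : int :=
  (1 - (i : int) + (cmin s i : int))%R.

Definition dint (s : seq nat) (k : nat) : int :=
  (\sum_(k.+1 <= i < (nmin s).+1) cc s i)%R.

Local Open Scope ring_scope.

Definition dreal (R : archiRealFieldType) (s : seq nat) (r : R) : R :=
  let k := Num.truncn r in
  (k.+1%:R - r) * (dint s k)%:~R + (r - k%:R) * (dint s k.+1)%:~R.

(* p_k for k = 1..N-1 (p_N = -infinity is handled in the statement) *)
Definition pk (s : seq nat) (k : nat) : int :=
  (\sum_(0 <= l < k.+1) (ntil s l : int)) - (k : int) * (ntil s k.+1 : int).

(* Main.v *)
Require Import Defs.
From HB Require Import structures.
From mathcomp Require Import all_boot all_order all_algebra.
Import Order.TTheory GRing.Theory Num.Theory.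

Section Aux.

Lemma bl1 (x : nat) (F : nat -> nat) (s : seq nat) j :
  j \in s -> \big[minn/x]_(i <- s) F i <= F j.
Proof.
elim: s => [|a s IH] //; rewrite in_cons big_cons => /orP [/eqP->|/IH H].
  exact: geq_minl.
exact: leq_trans (geq_minr _ _) H.
Qed.

Lemma bl2 (x : nat) (F : nat -> nat) (s : seq nat) :
  \big[minn/x]_(i <- s) F i <= x.
Proof.
elim: s => [|a s IH]; first by rewrite big_nil.
by rewrite big_cons; exact: leq_trans (geq_minr _ _) IH.
Qed.

Lemma bl3 (x : nat) (F : nat -> nat) (s : seq nat) b :
  b <= x -> (forall j, j \in s -> b <= F j) -> b <= \big[minn/x]_(i <- s) F i.
Proof.
move=> hx; elim: s => [|a s IH] H; first by rewrite big_nil.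
rewrite big_cons leq_min H ?mem_head // IH // => j hj.
by apply: H; rewrite in_cons hj orbT.
Qed.

Variable n : seq nat.
Variable N k : nat.
Hypothesis hsize : size n = N.+1.
Hypothesis hk1 : 1 <= k.
Hypothesis hkN : k <= N.

Local Notation t := (take k.+1 (sort leq n)).
Local Notation S j := (\sum_(0 <= l < j.+1) ntil n l).

Lemma sortt : sort leq t = t.
Proof.
apply: sorted_sort; first exact: leq_trans.
apply: take_sorted; apply: sort_sorted; exact: leq_total.
Qed.

Lemma L1 l : l < k.+1 -> ntil t l = ntil n l.
Proof. by move=> hl; rewrite /ntil sortt nth_take. Qed.

Lemma L2 : NN t = k.
Proof. by rewrite /NN size_takel // size_sort hsize. Qed.

Lemma L3 : nmin t = nmin n.
Proof. by rewrite /nmin L1. Qed.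

Lemma L4 i j : j <= k -> cterm t i j = cterm n i j.
Proof.
move=> hj; rewrite /cterm; congr ((_ - _) %/ _).
apply: eq_big_nat => l /andP [_ hl]; apply: L1; exact: leq_trans hl _.
Qed.

Lemma ntil_mono a b : a <= b -> b < N.+1 -> ntil n a <= ntil n b.
Proof.
move=> hab hb; rewrite /ntil.
apply: (sorted_leq_nth leq_trans leqnn 0 (sort_sorted leq_total n)) => //.
  by rewrite inE size_sort hsize (leq_ltn_trans hab hb).
by rewrite inE size_sort hsize.
Qed.

Lemma S_ge0 j : ntil n 0 <= S j.
Proof. by rewrite big_ltn // leq_addr. Qed.

Lemma step i j : 1 <= j -> i <= ntil n 0 -> S j <= i + j * ntil n j.+1 ->
  cterm n i j <= cterm n i j.+1.
Proof.
move=> hj hi hP; rewrite /cterm (@big_nat_recr _ _ _ j.+1) //= -addnBAC; last first.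
  exact: leq_trans hi (S_ge0 j).
set a := S j - i; set b := ntil n j.+1.
have ha : a <= j * b by rewrite /a leq_subLR.
rewrite leq_divRL // mulnS addnC; apply: leq_add; first exact: leq_divM.
have : a %/ j * j <= j * b := leq_trans (leq_divM a j) ha.
by rewrite mulnC leq_pmul2l.
Qed.

Lemma mono i : i <= ntil n 0 -> (k < N -> S k <= i + k * ntil n k.+1) ->
  forall d, k + d <= N -> cterm n i k <= cterm n i (k + d) /\
    (k + d < N -> S (k + d) <= i + (k + d) * ntil n (k + d).+1).
Proof.
move=> hi hP; elim=> [|d IH] hd; first by rewrite addn0.
have hlt : k + d < N by rewrite addnS in hd.
have [IH1 IH2] := IH (ltnW hlt).
have P := IH2 hlt.
split.
  rewrite addnS; apply: leq_trans IH1 _; apply: step => //.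
  exact: leq_trans hk1 (leq_addr _ _).
rewrite addnS => hlt2.
rewrite big_nat_recr //= mulSn [X in _ <= X]addnCA [X in _ <= X]addnC.
have hm : ntil n (k + d).+1 <= ntil n (k + d).+2 by apply: ntil_mono.
apply: leq_add => //; apply: leq_trans P _.
by rewrite leq_add2l leq_mul2l hm orbT.
Qed.

Lemma cmin_eq i : i <= ntil n 0 -> (k < N -> S k <= i + k * ntil n k.+1) ->
  cmin n i = cmin t i.
Proof.
move=> hi hP; apply/eqP; rewrite eqn_leq; apply/andP; split.
  rewrite /cmin L2; apply: bl3; first by rewrite L4 // bl2.
  move=> j; rewrite mem_index_iota => /andP [h1 h2]; rewrite L4 //.
  by apply: bl1; rewrite /NN hsize /= mem_index_iota h1 /= ltnS (leq_trans _ hkN).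
rewrite /cmin L2 /NN hsize /=; apply: bl3; first by rewrite -L4 // bl2.
move=> j; rewrite mem_index_iota => /andP [h1 h2].
case: (leqP j k) => hjk.
  by rewrite -L4 //; apply: bl1; rewrite mem_index_iota h1 ltnS.
have e := subnKC (ltnW hjk).
have hd : k + (j - k) <= N by rewrite e -ltnS.
rewrite -e.
have [m _] := mono i hi hP (j - k) hd.
apply: leq_trans m; rewrite -L4 //; apply: bl1; by rewrite mem_index_iota hk1 /=.
Qed.

End Aux.


Local Open Scope ring_scope.

Theorem corollary2 (R : archiRealFieldType) (n : seq nat) (N : nat)
  (hN : (1 <= N)%N) (hsize : size n = N.+1) (hpos : all (fun x => 0 < x)%N n)
  (k : nat) (hk1 : (1 <= k)%N) (hkN : (k <= N)%N) (r : R)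
  (hr0 : 0 <= r) (hr1 : r <= (ntil n 0)%:R)
  (hp : (k < N)%N -> (pk n k)%:~R <= r) :
  dreal n r = dreal (take k.+1 (sort leq n)) r.
Proof.
set k0 := Num.truncn r.
have hc : forall i, (k0 < i)%N -> (i <= ntil n 0)%N ->
    cmin n i = cmin (take k.+1 (sort leq n)) i.
  move=> i hi1 hi2; apply: (@cmin_eq n N k hsize hk1 hkN i hi2) => hkN'.
  have h := hp hkN'.
  have hlt : (pk n k)%:~R < (i%:Z)%:~R :> R.
    apply: le_lt_trans h _; apply: lt_le_trans (truncnS_gt r) _.
    by rewrite -[(i%:Z)%:~R]/(i%:R : R) ler_nat.
  move: hlt; rewrite ltr_int /pk -(big_morph Posz PoszD (erefl (Posz 0))).
  by rewrite ltrBlDr -PoszM -PoszD ltz_nat => /ltnW.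
have hd : forall j, (k0 <= j)%N -> dint n j = dint (take k.+1 (sort leq n)) j.
  move=> j hj; rewrite /dint L3; apply: eq_big_nat => i /andP [h1 h2].
  by rewrite /cc hc // (leq_ltn_trans hj h1).
by rewrite /dreal /= -/k0 hd // hd.
Qed.
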